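(* Let $G$ be a finite impartial game that is nimber-like. Then $G\equiv *n$ for some nonnegative integer $n$.
   Context: A game is identified with its set of options (written $\{g_1,\dots,g_k\}$); $\mathbf{E}$ denotes the game with no options, and $G\equiv H$ means $G$ and $H$ have the same set of options, recursively. Nimbers: $*0\equiv\mathbf{E}$ and $*n\equiv\{*0,*1,\dots,*(n-1)\}$. A game $G$ has hereditary transitivity if whenever $g$ is an option of $G$ and $g'$ is an option of $g$, then $g'$ is (identical to) an option of $G$. A game is nimber-like if it has hereditary transitivity and each of its options is nimber-like (recursively; equivalently, $G$ and every game reachable from $G$ by a sequence of moves has hereditary transitivity). *)

(* Defs.v *)
From mathcomp Require Import all_boot.
Set Implicit Arguments. Unset Strict Implicit. Unset Printing Implicit Defensive.

(* The list representation is only a presentation: games are compared with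
   the recursive identity [gid] (same SET of options, recursively). *)
Inductive game : Type := Game : seq game -> game.

Definition options (G : game) : seq game := let: Game gs := G in gs.

Fixpoint gid (G H : game) {struct G} : bool :=
  let: Game gs := G in
  let: Game hs := H in
  all (fun g => has (fun h => gid g h) hs) gs &&
  all (fun h => has (fun g => gid g h) gs) hs.

Definition is_option (g G : game) : bool := has (gid g) (options G).

Fixpoint nim (n : nat) : game :=
  match n with
  | 0 => Game [::]
  | k.+1 => Game (rcons (options (nim k)) (nim k))
  end.

Definition hered_trans (G : game) : bool :=
  all (fun g => all (fun g' => is_option g' G) (options g)) (options G).

Fixpoint nimber_like (G : game) : bool :=
  let: Game gs := G in
  hered_trans (Game gs) && all nimber_like gs.

(* Main.v *)
Require Import Defs.
From mathcomp Require Import all_boot zify.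

Fixpoint game_ind' (P : game -> Prop)
  (H : forall gs, (forall g, List.In g gs -> P g) -> P (Game gs)) (G : game) : P G :=
  match G with Game gs => H gs
    ((fix aux (l : seq game) : forall g, List.In g l -> P g :=
      match l return forall g, List.In g l -> P g with
      | nil => fun g (F : False) => False_ind _ F
      | cons x l' => fun g (Hin : x = g \/ List.In g l') => match Hin with
          | or_introl e => eq_ind x P (game_ind' P H x) g e
          | or_intror i => aux l' g i end
      end) gs) end.

Lemma hasIn (T : Type) (p : pred T) s : has p s <-> exists x, List.In x s /\ p x.
Proof.
elim: s => [|x s IH] /=; first by split => // [[x []]].
split.
  case/orP => [px|/IH [y [Hy py]]]; first by exists x; auto.
  by exists y; auto.
move=> [y [[<-|Hy] py]]; apply/orP; first by left.
by right; apply/IH; exists y.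
Qed.

Lemma allIn (T : Type) (p : pred T) s : all p s <-> forall x, List.In x s -> p x.
Proof.
elim: s => [|x s IH] /=; first by split.
split.
  by case/andP => px /IH H y [<-|Hy]; auto.
move=> H; apply/andP; split; first by apply: H; left.
by apply/IH => y Hy; apply: H; right.
Qed.

Lemma gidE gs hs : gid (Game gs) (Game hs) <->
  (forall g, List.In g gs -> exists h, List.In h hs /\ gid g h) /\
  (forall h, List.In h hs -> exists g, List.In g gs /\ gid g h).
Proof.
rewrite /=; split.
  case/andP => /allIn A /allIn B; split.
    by move=> g /A /hasIn.
  by move=> h /B /hasIn.
move=> [A B]; apply/andP; split; apply/allIn.
  by move=> g /A ?; apply/hasIn.
by move=> h /B ?; apply/hasIn.
Qed.

Lemma gid_sym G H : gid G H -> gid H G.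
Proof.
elim/game_ind': G H => gs IH [hs] /gidE [A B]; apply/gidE; split.
  move=> h /B [g [Hg gh]]; exists g; split => //; exact: IH Hg _ gh.
move=> g Hg; have [h [Hh gh]] := A g Hg; exists h; split => //; exact: IH Hg _ gh.
Qed.

Lemma gid_trans G H K : gid G H -> gid H K -> gid G K.
Proof.
elim/game_ind': G H K => gs IH [hs] [ks] /gidE [A B] /gidE [C D]; apply/gidE; split.
  move=> g Hg; have [h [Hh gh]] := A g Hg; have [k [Hk hk]] := C h Hh.
  exists k; split => //; exact: IH Hg _ _ gh hk.
move=> k /D [h [Hh hk]]; have [g [Hg gh]] := B h Hh.
exists g; split => //; exact: IH Hg _ _ gh hk.
Qed.

Arguments gid_sym {G H}.
Arguments gid_trans {G H K}.

Lemma nim_opt m h : List.In h (options (nim m)) <-> exists j, j < m /\ h = nim j.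
Proof.
elim: m h => [|m IH] h /=; first by split => // [[j []]].
rewrite -cats1 List.in_app_iff IH /=; split.
  move=> [[j [jm ->]]|[<-|[]]]; first by exists j; split => //; apply: ltnW.
  by exists m.
move=> [j [jm ->]]; rewrite ltnS leq_eqVlt in jm; case/orP: jm => [/eqP->|jm].
  by right; left.
by left; exists j.
Qed.

Lemma gidO G H : gid G H <->
  (forall g, List.In g (options G) -> exists h, List.In h (options H) /\ gid g h) /\
  (forall h, List.In h (options H) -> exists g, List.In g (options G) /\ gid g h).
Proof. case: G H => gs [hs]; exact: gidE. Qed.

Lemma nim_inj a b : gid (nim a) (nim b) -> a = b.
Proof.
move: {2}(a + b) (leqnn (a + b)) => N; elim: N a b => [|N IH] a b.
  by rewrite leqn0 addn_eq0 => /andP [/eqP-> /eqP->].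
move=> Hab /gidO [A B].
case: (ltngtP a b) => // ab.
- have : List.In (nim a) (options (nim b)) by apply/nim_opt; exists a.
  move/B => [g [/nim_opt [k [ka ->]]]] /gid_sym /IH E.
  have : a = k by apply: E; move: Hab ab ka; clear; lia.
  by move=> ak; rewrite ak ltnn in ka.
- have : List.In (nim b) (options (nim a)) by apply/nim_opt; exists b.
  move/A => [h [/nim_opt [k [kb ->]]]] /IH E.
  have : b = k by apply: E; move: Hab ab kb; clear; lia.
  by move=> bk; rewrite bk ltnn in kb.
Qed.

Lemma bound_lem (gs : seq game) :
  (forall g, List.In g gs -> exists n, gid g (nim n)) ->
  exists N, forall n g, List.In g gs -> gid g (nim n) -> n < N.
Proof.
elim: gs => [|x s IH] H; first by exists 0 => n g [].
have [N HN] := IH (fun g Hg => H g (or_intror Hg)).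
have [m Hm] := H x (or_introl erefl).
exists (maxn N m.+1) => n g [<-|Hg] Hgn.
  have -> : n = m by apply: nim_inj; exact: (gid_trans (gid_sym Hgn) Hm).
  by rewrite leq_max leqnn orbT.
by rewrite leq_max (HN n g Hg Hgn).
Qed.

Theorem theorem3p3 (G : game) : nimber_like G -> exists n : nat, gid G (nim n).
Proof.
elim/game_ind': G => gs IH /= /andP [HT /allIn NL].
have IH' : forall g, List.In g gs -> exists n, gid g (nim n).
  by move=> g Hg; exact: IH g Hg (NL g Hg).
have [N HN] := bound_lem gs IH'.
pose S n := has (fun g => gid g (nim n)) gs.
have down : forall k j, S k -> j < k -> S j.
  move=> k j /hasIn [g [Hg gk]] jk.
  move/allIn: HT => /(_ g Hg) /allIn HTg.
  move/gidO: gk => [_ B].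
  have : List.In (nim j) (options (nim k)) by apply/nim_opt; exists j.
  move/B => [g' [Hg' g'j]].
  move: (HTg g' Hg') => /hasIn [g'' [Hg'' g'g'']].
  apply/hasIn; exists g''; split => //.
  exact: gid_trans (gid_sym g'g'') g'j.
have exP : exists n, ~~ S n.
  exists N; apply/negP => /hasIn [g [Hg gN]].
  by have := HN N g Hg gN; rewrite ltnn.
case: (ex_minnP exP) => m nSm minm.
have Sk : forall k, S k -> k < m.
  move=> k Sk; rewrite ltnNge; apply/negP => mk.
  move: mk; rewrite leq_eqVlt => /orP [/eqP mk|mk].
    by rewrite mk Sk in nSm.
  by rewrite (down _ _ Sk mk) in nSm.
have lt_S : forall k, k < m -> S k.
  move=> k km; apply/negPn/negP => nSk.
  by have := minm k nSk; rewrite leqNgt km.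
exists m; apply: (proj2 (gidO (Game gs) (nim m))); split => /=.
  move=> g Hg; have [n gn] := IH' g Hg.
  exists (nim n); split => //; apply/nim_opt; exists n; split => //.
  by apply: Sk; apply/hasIn; exists g.
move=> h /nim_opt [j [jm ->]].
by move/hasIn: (lt_S j jm) => [g [Hg gj]]; exists g.
Qed.
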